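(* Let $G$ be a finite group. Then: (a) $\nu_1(G) = \Phi(F(G)) \leq \Phi(G)$; (b) $\nu_i(G)$ is a characteristic subgroup of $G$ for every $i \geq 0$; (c) $\nu_j(G/\nu_i(G)) = \nu_j(G)/\nu_i(G)$ for all integers $i,j$ with $i \geq j \geq 0$ and $i \geq 1$.
   Context: For a finite group $G$, $F(G)$ denotes its Fitting subgroup and $\Phi(G)$ its Frattini subgroup. The $F$-central series of $G$ is defined by $\nu_0(G)=F(G)$ and, for $i\ge 0$, $\nu_{i+1}(G)$ is the smallest normal subgroup $N$ of $F(G)$ with $N\le \nu_i(G)$ such that $\nu_i(G)/N$ is centralized by $F(G)$ and is a direct product of elementary abelian groups. *)

(* Defs.v *)
From HB Require Import structures.
From mathcomp Require Import all_boot all_fingroup all_solvable.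
Set Implicit Arguments. Unset Strict Implicit. Unset Printing Implicit Defensive.
Local Open Scope group_scope.

(* A is a direct product of elementary abelian groups: A is the (internal)
   direct product of its p-cores 'O_p(A), p ranging over the primes of #|A|,
   and each of these factors is an elementary abelian p-group. *)
Definition elem_abelian_prod (gT : finGroupType) (A : {set gT}) : bool :=
  (A == \big[dprod/1]_(p <- primes #|A|) 'O_p(A))
  && all (fun p => p.-abelem 'O_p(A)) (primes #|A|).

(* Admissible N for one step of the F-central series, with F = F(G) and
   V = nu_i(G): N normal in F, N <= V, V/N centralized by F, and V/N a
   direct product of elementary abelian groups. *)
Definition Fcentral_step_ok (gT : finGroupType) (F V N : {set gT}) : bool :=
  [&& N <| F, N \subset V, (F / N) \subset 'C(V / N)
    & elem_abelian_prod (V / N)].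

(* nu_{i+1} = smallest such N = intersection of all admissible N. *)
Fixpoint Fcentral_rec (gT : finGroupType) (F : {set gT}) (i : nat) : {set gT} :=
  match i with
  | 0 => F
  | i'.+1 => let V := Fcentral_rec F i' in
             \bigcap_(N : {group gT} | Fcentral_step_ok F V N) N
  end.

Definition nu (gT : finGroupType) (i : nat) (G : {set gT}) : {set gT} :=
  Fcentral_rec 'F(G) i.

(* Main.v *)
Require Import Defs.
From HB Require Import structures.
From mathcomp Require Import all_boot all_fingroup all_solvable.
Set Implicit Arguments. Unset Strict Implicit. Unset Printing Implicit Defensive.
Local Open Scope group_scope.

Section Aux.
Variable gT : finGroupType.
Implicit Types G H M K V P F : {group gT}.

Lemma Phi_normal_sub H G : H <| G -> 'Phi(H) \subset 'Phi(G).
Proof.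
move=> nsHG; have nsPG : 'Phi(H) <| G := char_normal_trans (Phi_char H) nsHG.
have sHG := normal_sub nsHG.
apply/bigcapsP=> M /predU1P[-> | maxM].
  exact: subset_trans (Phi_sub H) sHG.
have sMG : M \subset G := proper_sub (maxgroupp maxM).
have nPM : M \subset 'N('Phi(H)) := subset_trans sMG (normal_norm nsPG).
have sMJ : M \subset M <*> 'Phi(H) by apply: joing_subl.
have sJG : M <*> 'Phi(H) \subset G by rewrite join_subG sMG normal_sub.
case: (boolP ((M <*> 'Phi(H))%G \proper G)) => [prJ | nprJ].
  have := (maxgroupP maxM).2 _ prJ sMJ => /= eJ.
  by rewrite -eJ joing_subr.
have eJ : M <*> 'Phi(H) = G.
  apply/eqP; rewrite eqEsubset sJG /=.
  by move: nprJ; rewrite properEneq sJG andbT negbK => /eqP ->.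
have eH : 'Phi(H) <*> (H :&: M) = H.
  rewrite norm_joinEr; last first.
    by apply: subset_trans (subsetIl _ _) (subset_trans sHG (normal_norm nsPG)).
  rewrite /= setIC group_modl ?Phi_sub //.
  rewrite -norm_joinEr //.
  by rewrite joingC eJ; apply/setIidPr.
have := Phi_nongen eH => /= eHM.
apply: subset_trans (Phi_sub H) _.
by rewrite -eHM gen_subG subsetIr.
Qed.

Lemma pcore_Phi_sub (p : nat) V : nilpotent V ->
  'O_p('Phi(V)) \subset 'Phi('O_p(V)).
Proof.
move=> nilV.
have chX : 'O_p('Phi(V)) \char V := char_trans (pcore_char _ _) (Phi_char V).
have sXP : 'O_p('Phi(V)) \subset 'O_p(V).
  by rewrite pcore_max ?pcore_pgroup ?char_normal.
have sXPhi : 'O_p('Phi(V)) \subset 'Phi(V) := pcore_sub _ _.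
apply/bigcapsP=> M /predU1P[-> // | maxM].
pose K := 'O_p^'(V)%G.
have dV : 'O_p(V) \x K = V := nilpotent_pcoreC p nilV.
have [_ defV cPK tiPK] := dprodP dV.
have sMP : M \subset 'O_p(V) := proper_sub (maxgroupp maxM).
have nsKV : K <| V := pcore_normal _ _.
clearbody K.
have sPV : 'O_p(V) \subset V := pcore_sub _ _.
have nKM : M \subset 'N(K) := subset_trans sMP (subset_trans sPV (normal_norm nsKV)).
have tiMK : M :&: K = 1.
  by apply/trivgP; rewrite -tiPK setSI.
have ntP : 'O_p(V) != 1 :> {set gT}.
  apply: contraTneq (maxgroupp maxM) => P1.
  by rewrite P1 properE sub1G andbF.
have [pr_p _ _] := pgroup_pdiv (pcore_pgroup p V) ntP.
have maxMK : maximal (M <*> K) V.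
  apply: p_index_maximal.
    by rewrite join_subG (subset_trans sMP sPV) normal_sub.
  rewrite -divgS ?join_subG ?(subset_trans sMP sPV) ?normal_sub //.
  have cMK : #|M <*> K| = (#|M| * #|K|)%N by rewrite norm_joinEl // TI_cardMg.
  have cV : #|V| = (#|'O_p(V)| * #|K|)%N by rewrite (dprod_card dV).
  rewrite /= cMK cV.
  rewrite -(Lagrange sMP) -mulnA divnMl ?cardG_gt0 //.
  by rewrite mulnK ?cardG_gt0 // (p_maximal_index (pcore_pgroup p V) maxM).
have sPhiMK : 'Phi(V) \subset M <*> K := Phi_sub_max maxMK.
have : 'O_p('Phi(V)) \subset 'O_p(V) :&: (M * K).
  by rewrite subsetI sXP -norm_joinEl // (subset_trans sXPhi sPhiMK).
by rewrite setIC -group_modl // setIC tiPK mulg1.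
Qed.

Lemma Phi_nil_gen V n : nilpotent V -> #|V| < n ->
  'Phi(V) = <<\bigcup_(p < n) 'Phi('O_p(V))>>.
Proof.
move=> nilV ltVn; apply/eqP; rewrite eqEsubset; apply/andP; split; last first.
  rewrite gen_subG; apply/bigcupsP=> p _.
  exact: Phi_normal_sub (pcore_normal _ _).
have nilP : nilpotent 'Phi(V) := nilpotentS (Phi_sub V) nilV.
rewrite -{1}(nilpotent_Fitting nilP) FittingEgen genS //.
apply/bigcupsP=> [[p ltp]] /= _.
have ltpn : p < n.
  apply: leq_trans ltp (leq_trans _ ltVn); rewrite ltnS.
  exact: subset_leq_card (Phi_sub V).
apply: subset_trans (pcore_Phi_sub p nilV) _.
exact: (bigcup_max (Ordinal ltpn)).
Qed.

Lemma der1_sub_Phi_nil F : nilpotent F -> F^`(1) \subset 'Phi(F).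
Proof.
move=> nilF; apply/bigcapsP=> M /predU1P[-> | maxM]; first exact: der1_subG.
have prM : M \proper F := maxgroupp maxM.
have sMF := proper_sub prM.
have nMF : F \subset 'N(M).
  have := nilpotent_proper_norm nilF prM => prN.
  have sNF : 'N_F(M) \subset F := subsetIl _ _.
  case: (boolP ('N_F(M)%G \proper F)) => [prNF | nprNF].
    have := (maxgroupP maxM).2 _ prNF (proper_sub prN) => /= eN.
    by rewrite eN properxx in prN.
  have eNF : 'N_F(M) = F.
    apply/eqP; rewrite eqEsubset sNF /=.
    by move: nprNF; rewrite properEneq sNF andbT negbK => /eqP ->.
  by rewrite -eNF subsetIr.
apply: der1_min => //.
have [_ [x Fx nMx]] := properP prM.
have nMxx : x \in 'N(M) := subsetP nMF x Fx.
have sMJ : M \subset M <*> <[x]> := joing_subl _ _.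
have sJF : M <*> <[x]> \subset F by rewrite join_subG sMF cycle_subG.
have eJ : M <*> <[x]> = F.
  case: (boolP ((M <*> <[x]>)%G \proper F)) => [prJ | nprJ].
    have := (maxgroupP maxM).2 _ prJ sMJ => /= eJ.
    by case/negP: nMx; rewrite -eJ mem_gen // inE cycle_id orbT.
  apply/eqP; rewrite eqEsubset sJF /=.
  by move: nprJ; rewrite properEneq sJF andbT negbK => /eqP ->.
rewrite -eJ quotientYidl ?cycle_subG // quotient_cycle //.
exact: cycle_abelian.
Qed.

End Aux.

Section Aux2.
Variable gT : finGroupType.
Implicit Types G H M K V P F : {group gT}.

Lemma quotient_pcore_nil (p : nat) V M : nilpotent V -> V \subset 'N(M) ->
  'O_p(V) / M = 'O_p(V / M).
Proof.
move=> nilV nMV.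
apply: nilpotent_Hall_pcore (quotient_nil M nilV) _.
apply: quotient_pHall (subset_trans (pcore_sub _ _) nMV) _.
exact: nilpotent_pcore_Hall.
Qed.

Lemma quotient_Phi_nil V M : nilpotent V -> V \subset 'N(M) ->
  'Phi(V) / M = 'Phi(V / M).
Proof.
move=> nilV nMV.
have nilQ : nilpotent (V / M) := quotient_nil M nilV.
have ltQ : #|V / M| < #|V|.+1 by rewrite ltnS leq_quotient.
have eQp (p : nat) : 'Phi('O_p(V)) / M = 'Phi('O_p(V / M)).
  rewrite -(quotient_pcore_nil p nilV nMV) (quotient_Phi (pcore_pgroup p V)) //.
  exact: subset_trans (pcore_sub _ _) nMV.
apply/eqP; rewrite eqEsubset; apply/andP; split.
  rewrite (Phi_nil_gen nilV (ltnSn _)) quotient_gen; last first.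
    apply/bigcupsP=> p _; apply: subset_trans nMV.
    exact: subset_trans (Phi_sub _) (pcore_sub _ _).
  rewrite gen_subG sub_quotient_pre; last first.
    apply/bigcupsP=> p _; apply: subset_trans nMV.
    exact: subset_trans (Phi_sub _) (pcore_sub _ _).
  apply/bigcupsP=> p _; rewrite -sub_quotient_pre; last first.
    exact: subset_trans (subset_trans (Phi_sub _) (pcore_sub _ _)) nMV.
  by rewrite eQp /=; apply: (Phi_normal_sub (pcore_normal p (V / M)%G)).
rewrite (Phi_nil_gen nilQ ltQ) gen_subG; apply/bigcupsP=> p _.
rewrite -eQp quotientS //; exact: Phi_normal_sub (pcore_normal _ _).
Qed.

End Aux2.

Section Aux3.
Variable gT : finGroupType.
Implicit Types G H M K V P F A N : {group gT}.

Lemma elem_abelian_prodE A : nilpotent A ->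
  elem_abelian_prod A = ('Phi(A) == 1).
Proof.
move=> nilA; rewrite /elem_abelian_prod.
have -> : (gval A == \big[dprod/1]_(p <- primes #|A|) 'O_p(A)).
  by apply/eqP; rewrite -/(Fitting A) nilpotent_Fitting.
rewrite /= (Phi_nil_gen nilA (ltnSn _)) -subG1 gen_subG.
apply/allP/bigcupsP=> [abA [p ltp] _ | sub1 p].
  rewrite /= subG1 (trivg_Phi (pcore_pgroup p A)).
  rewrite /=; have [-> | ntP] := eqVneq ('O_p(A)) 1; first exact: abelem1.
  apply: abA; have [pr_p pdv _] := pgroup_pdiv (pcore_pgroup p A) ntP.
  by rewrite mem_primes pr_p cardG_gt0 (dvdn_trans pdv) ?cardSg ?pcore_sub.
rewrite mem_primes => /and3P[_ _ pdv].
have ltp : p < #|A|.+1 by rewrite ltnS dvdn_leq.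
have := sub1 (Ordinal ltp) isT; rewrite /= subG1.
by rewrite (trivg_Phi (pcore_pgroup p A)).
Qed.

End Aux3.

Section Aux4.
Variable gT : finGroupType.
Implicit Types G H M K V P F A N : {group gT}.

Lemma step_okE F V N : nilpotent F -> V <| F ->
  Fcentral_step_ok F V N =
  [&& N <| F, N \subset V, [~: F, V] \subset N & 'Phi(V) \subset N].
Proof.
move=> nilF nsVF; rewrite /Fcentral_step_ok.
case nsNF: (N <| F) => //; case sNV: (N \subset V) => //=.
have nNF := normal_norm nsNF.
have nNV : V \subset 'N(N) := subset_trans (normal_sub nsVF) nNF.
rewrite quotient_cents2 //; case: ([~: F, V] \subset N) => //=.
have nilV : nilpotent V := nilpotentS (normal_sub nsVF) nilF.
rewrite (elem_abelian_prodE (quotient_nil N nilV)) /=.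
rewrite -(quotient_Phi_nil nilV nNV) -subG1 quotient_sub1 //.
exact: subset_trans (Phi_sub V) nNV.
Qed.

Lemma step_bigcap F V : nilpotent F -> V <| F ->
  \bigcap_(N : {group gT} | Fcentral_step_ok F V N) N = [~: F, V] <*> 'Phi(V).
Proof.
move=> nilF nsVF.
have nsRF : [~: F, V] <| F.
  have := commg_normal F V; rewrite (joing_idPl (normal_sub nsVF)) //.
have nsPF : 'Phi(V) <| F := char_normal_trans (Phi_char V) nsVF.
have okW : Fcentral_step_ok F V ([~: F, V] <*> 'Phi(V))%G.
  rewrite step_okE //= normalY //= joing_subl joing_subr join_subG /=.
  by rewrite commg_subr normal_norm // Phi_sub.
apply/eqP; rewrite eqEsubset; apply/andP; split.
  apply: (@bigcap_min _ _ ([~: F, V] <*> 'Phi(V))%G _ (fun N : {group gT} => Fcentral_step_ok F V N) (fun N : {group gT} => gval N) okW) => /=.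
  exact: subxx.
apply/bigcapsP=> N; rewrite step_okE // => /and4P[_ _ sRN sPN].
by rewrite join_subG sRN.
Qed.

End Aux4.

Fixpoint nug (gT : finGroupType) (F : {group gT}) (i : nat) : {group gT} :=
  match i with
  | 0 => F
  | i'.+1 => ([~: F, nug F i'] <*> 'Phi(nug F i'))%G
  end.

Section Nug.
Variable gT : finGroupType.
Implicit Types G H M K V P F A N : {group gT}.

Lemma nug_normal F i : nug F i <| F.
Proof.
elim: i => [|i IH] /=; first exact: normal_refl.
apply: normalY; last exact: char_normal_trans (Phi_char _) IH.
by have := commg_normal F (nug F i); rewrite (joing_idPl (normal_sub IH)).
Qed.

Lemma nug_subS F i : nug F i.+1 \subset nug F i.
Proof.
rewrite /= join_subG Phi_sub commg_subr normal_norm //; exact: nug_normal.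
Qed.

Lemma nug_sub_le F i j : j <= i -> nug F i \subset nug F j.
Proof.
elim: i => [|i IH]; first by rewrite leqn0 => /eqP ->.
rewrite leq_eqVlt => /orP[/eqP -> // | ]; rewrite ltnS => /IH.
exact: subset_trans (nug_subS F i).
Qed.

Lemma Fcentral_nug F i : nilpotent F -> Fcentral_rec F i = nug F i.
Proof.
move=> nilF; elim: i => [|i IH] //=.
by rewrite IH step_bigcap // nug_normal.
Qed.

Lemma nug_char G i : nug 'F(G) i \char G.
Proof.
elim: i => [|i IH] /=; first exact: Fitting_char.
apply: charY; first exact: charR (Fitting_char G) IH.
exact: char_trans (Phi_char _) IH.
Qed.

End Nug.

Section NugQ.
Variable gT : finGroupType.
Implicit Types G H M K V P F A N : {group gT}.

Lemma quotient_nug F M i : nilpotent F -> F \subset 'N(M) ->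
  nug (F / M)%G i = nug F i / M :> {set _}.
Proof.
move=> nilF nMF; elim: i => [|i IH] //=.
rewrite IH.
have sVF : nug F i \subset F := normal_sub (nug_normal F i).
have nMV : nug F i \subset 'N(M) := subset_trans sVF nMF.
have nilV : nilpotent (nug F i) := nilpotentS sVF nilF.
have nMR : [~: F, nug F i] \subset 'N(M).
  by apply: subset_trans nMF; rewrite commg_subl (subset_trans sVF) ?normG.
rewrite quotientY // ?(subset_trans (Phi_sub _)) //.
by rewrite quotientR // quotient_Phi_nil.
Qed.

End NugQ.

Section FitPhi.
Variable gT : finGroupType.
Implicit Types G H M K V P F A N : {group gT}.

Lemma Fitting_quotient_Phi G M : M <| G -> M \subset 'Phi(G) ->
  'F(G / M) = 'F(G) / M.
Proof.
move=> nsMG sMPhi; have nMG := normal_norm nsMG.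
apply/eqP; rewrite eqEsubset; apply/andP; split; last first.
  apply: Fitting_max; first exact: quotient_normal (Fitting_normal G).
  exact: quotient_nil _ (Fitting_nil G).
pose L := (coset M @*^-1 'F(G / M))%G.
have nsLG : L <| G.
  by rewrite -(quotientGK nsMG) cosetpre_normal Fitting_normal.
have eL : L / M = 'F(G / M) by rewrite cosetpreK.
have sLG := normal_sub nsLG.
rewrite -eL quotientS //.
rewrite -(Sylow_gen L) gen_subG; apply/bigcupsP=> P /SylowP[p pr_p sylP].
have sPL := pHall_sub sylP.
have sPG := subset_trans sPL sLG.
have nMP : P \subset 'N(M) := subset_trans sPG nMG.
apply: Fitting_max; last exact: pgroup_nil (pHall_pgroup sylP).
rewrite /normal sPG /=.
have sylQ : p.-Hall(L / M) (P / M) := quotient_pHall nMP sylP.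
have nilLM : nilpotent (L / M) by rewrite eL Fitting_nil.
have eQ : P / M = 'O_p(L / M) := nilpotent_Hall_pcore nilLM sylQ.
have nsQ : P / M <| G / M.
  rewrite eQ; apply: char_normal_trans (pcore_char _ _) _.
  by have := Fitting_normal (G / M)%G; rewrite -eL.
pose K := (coset M @*^-1 (P / M))%G.
have nsKG : K <| G by rewrite -(quotientGK nsMG) cosetpre_normal.
have sPK : P \subset K by rewrite -sub_quotient_pre.
have sKL : K \subset L by apply: morphpreS; apply: subset_trans (quotientS M sPL) _; rewrite eL.
have sylK : p.-Hall(K) P := pHall_subl sPK sKL sylP.
have defG := Frattini_arg nsKG sylK.
have eK : K = M * P :> {set gT} by rewrite /= quotientK.
have sPN : P \subset 'N_G(P) by rewrite subsetI sPG normG.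
have eG : M * 'N_G(P) = G.
  by rewrite -{1}(mulSGid sPN) mulgA -eK.
have ePhi : 'Phi(G) <*> 'N_G(P) = G.
  apply/eqP; rewrite eqEsubset join_subG Phi_sub subsetIl /=.
  rewrite -{1}eG (subset_trans (mulSg _ sMPhi)) //.
  by rewrite mul_subG ?joing_subl ?joing_subr.
have := Phi_nongen ePhi; rewrite genGid => eN.
by rewrite -eN subsetIr.
Qed.

End FitPhi.

Theorem lemma2p2 (gT : finGroupType) (G : {group gT}) :
  [/\ nu 1 G = 'Phi('F(G)) /\ 'Phi('F(G)) \subset 'Phi(G),
      (forall i : nat, nu i G \char G)
    & (forall i j : nat, j <= i -> 1 <= i ->
         nu j (G / nu i G) = nu j G / nu i G)].
Proof.
have nilF := Fitting_nil G.
have nuE i : nu i G = nug 'F(G) i by rewrite /nu Fcentral_nug.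
have sPhi : 'Phi('F(G)) \subset 'Phi(G) := Phi_normal_sub (Fitting_normal G).
have nu1 : nug 'F(G) 1 = 'Phi('F(G)) :> {set gT}.
  rewrite /=; apply/eqP; rewrite eqEsubset join_subG subxx joing_subr andbT.
  by rewrite -derg1 der1_sub_Phi_nil.
split; first by split; rewrite // nuE nu1.
  by move=> i; rewrite nuE nug_char.
move=> i j _ i_ge1; rewrite (nuE i).
have nsMG : nug 'F(G) i <| G := char_normal (nug_char G i).
have sMPhi : nug 'F(G) i \subset 'Phi(G).
  by apply: subset_trans (nug_sub_le _ i_ge1) _; rewrite nu1.
have nMF : 'F(G) \subset 'N(nug 'F(G) i).
  exact: subset_trans (Fitting_sub G) (normal_norm nsMG).
rewrite /nu (Fitting_quotient_Phi nsMG sMPhi).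
have := Fcentral_nug j (quotient_nil (nug 'F(G) i) nilF) => /= ->.
by rewrite quotient_nug // Fcentral_nug.
Qed.
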